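(* Let $N,t\in\mathbb{Z}^+$ with $t\le N$, and let $\boldsymbol{\mu}\in\mathbb{R}_+^N$ satisfy $0<\mu[n]\le1$ for all $n$ and $\sum_{n=1}^N\mu[n]=t$. Run the following procedure: set $\boldsymbol{m}\leftarrow\boldsymbol{\mu}$, $F\leftarrow0$; while $\boldsymbol{m}$ has a nonzero entry: $F\leftarrow F+1$; $t'\leftarrow\sum_n m[n]$; let $\ell[1],\ldots,\ell[N']$ be the indices of the nonzero entries of $\boldsymbol{m}$ ordered so that $m[\ell[1]]\le\cdots\le m[\ell[N']]$; set $\mathcal{N}_F\leftarrow\{\ell[1],\ell[N'-t+2],\ldots,\ell[N']\}$; if $N'\ge t+1$ set $\alpha_F\leftarrow\min\big(\frac{t'}{t}-m[\ell[N'-t+1]],\,m[\ell[1]]\big)$, otherwise set $\alpha_F\leftarrow m[\ell[1]]$; then subtract $\alpha_F$ from $m[n]$ for every $n\in\mathcal{N}_F$. Then this loop terminates with $\boldsymbol{m}=\boldsymbol{0}$ after at most $N$ iterations (i.e., the final $F$ satisfies $F\le N$).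
   Context: This is the storage placement procedure (''Algorithm 1'') for heterogeneous storage-constrained PIR: $\boldsymbol{\mu}$ is the vector of normalized database storage capacities, $t$ their sum, and each iteration $f$ assigns a sub-message set of normalized size $\alpha_f$ to the $t$ databases in $\mathcal{N}_f$ (the database with the smallest remaining nonzero storage and the $t-1$ with the largest remaining storage). *)

(* Defs.v *)
From HB Require Import structures.
From mathcomp Require Import all_boot all_order all_algebra.
Set Implicit Arguments. Unset Strict Implicit. Unset Printing Implicit Defensive.
Import Order.TTheory GRing.Theory Num.Theory.
Local Open Scope ring_scope.

(* One iteration of Algorithm 1, as a (nondeterministic, because ties in the
   sorting may be broken arbitrarily) relation between the current storage
   vector [m] and the next one [m'].
   [l = l1 :: s] is the list ell[1], ..., ell[N'] of indices of the nonzero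
   entries of m, sorted by nondecreasing value (0-based: ell[k] = nth l1 l (k-1)).
   N_F = {ell[1]} U {ell[N'-t+2], ..., ell[N']}
       = {l1} U (drop (N' - t + 1) l)                          (0-based).
   alpha_F = min(t'/t - m[ell[N'-t+1]], m[ell[1]])  if N' >= t+1,
           = m[ell[1]]                               otherwise. *)
Definition alg_step (R : realFieldType) (N t : nat) (m m' : 'I_N -> R) : Prop :=
  exists (l1 : 'I_N) (s : seq 'I_N),
    let l := l1 :: s in
    let N' := size l in
    let tp := \sum_(n < N) m n in
    [/\ uniq l,
        (forall i, (i \in l) = (m i != 0)),
        sorted (fun i j => m i <= m j) l &
        let inNF := fun j => (j == l1) || (j \in drop (N' + 1 - t)%N l) in
        let alpha := if (t + 1 <= N')%N
                     then Num.min (tp / t%:R - m (nth l1 l (N' - t)%N)) (m l1)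
                     else m l1 in
        forall j, m' j = if inNF j then m j - alpha else m j].

(* Main.v *)
Require Import Defs.
From HB Require Import structures.
From mathcomp Require Import all_boot all_order all_algebra.
From mathcomp Require Import zify ring lra.
Import Order.TTheory GRing.Theory Num.Theory.
Set Implicit Arguments. Unset Strict Implicit. Unset Printing Implicit Defensive.
Local Open Scope ring_scope.

Lemma memdrop (T : eqType) (l : seq T) (k : nat) (j : T) :
  j \in l -> (k <= index j l)%N -> j \in drop k l.
Proof.
move=> jl kj; have x0 := j.
rewrite -(nth_index j jl) -(subnKC kj) -nth_drop mem_nth // size_drop.
rewrite -index_mem in jl; lia.
Qed.

Lemma drop_index_ge (T : eqType) (l : seq T) (k : nat) (j : T) :
  uniq l -> j \in drop k l -> (k <= index j l)%N.
Proof.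
move=> ul jd; rewrite leqNgt; apply/negP => ik.
have jl : j \in l := mem_drop jd.
move: ul; rewrite -(cat_take_drop k l) cat_uniq => /and3P [_ /hasPn H _].
apply/negP: (H _ jd); rewrite negbK.
rewrite -(nth_index j jl) -(nth_take j ik) mem_nth // size_take.
rewrite -index_mem in jl; case: ifP => //; lia.
Qed.
Definition sumv (R : realFieldType) N (m : 'I_N -> R) := \sum_(n < N) m n.
Definition nzp (R : realFieldType) N (m : 'I_N -> R) := [pred n | m n != 0].
Definition tightp (R : realFieldType) N (t : nat) (m : 'I_N -> R) :=
  [pred n | (m n != 0) && (m n == sumv m / t%:R)].
Definition pot (R : realFieldType) N (t : nat) (m : 'I_N -> R) :=
  (#|nzp m| - minn #|tightp t m| (#|nzp m|).-1)%N.
Definition invm (R : realFieldType) N (t : nat) (m : 'I_N -> R) :=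
  (forall n, 0 <= m n) /\ (forall n, m n <= sumv m / t%:R).

Lemma L1 (R : realFieldType) (a b : R) : 0 < a -> 0 <= b -> 0 < a + b.
Proof. lra. Qed.
Lemma L2 (R : realFieldType) (x y : R) : 0 < x -> y = x + y -> False.
Proof. lra. Qed.
Lemma L3 (R : realFieldType) (a b d c : R) : a <= b -> b <= d -> d < c -> 0 < c - a.
Proof. lra. Qed.
Lemma L4 (R : realFieldType) (a b al c : R) : a <= b -> al <= c - b -> a <= c - al.
Proof. lra. Qed.
Lemma L5 (R : realFieldType) (a b c : R) : a <= b -> b < c -> a = c -> False.
Proof. lra. Qed.
Lemma L6 (R : realFieldType) (a b c : R) : a <= b -> b <= c -> 0 <= a - b -> 0 <= c - b.
Proof. lra. Qed.

Lemma N0 (a t : nat) : (t <= a)%N -> ~~ (t + 1 <= a)%N -> a = t.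
Proof. move=> *; lia. Qed.
Lemma N1 (a t : nat) : (0 < t)%N -> (t + 1 <= a)%N -> ((a - (a - t).+1).+1 = t)%N.
Proof. move=> *; lia. Qed.
Lemma N2 (a t : nat) : (t + 1 <= a)%N -> (a - (a - t).+1 <= t.-1)%N.
Proof. rewrite -?subn1 => *; lia. Qed.
Lemma P0 (n T T' : nat) : (0 < n)%N -> (0 - minn T' 0 < n - minn T n.-1)%N.
Proof. rewrite -?subn1 => *; lia. Qed.
Lemma P1 (n' n T' T t : nat) : (T <= T')%N -> (T <= t.-1)%N -> (t + 1 <= n)%N ->
  (1 + n' <= n)%N -> (n' - minn T' n'.-1 < n - minn T n.-1)%N.
Proof. rewrite -?subn1 => *; lia. Qed.
Lemma P2 (n' n T' T t : nat) : (0 < t)%N -> (n' <= n)%N -> (1 + T <= T')%N -> (T <= t.-1)%N -> (t + 1 <= n)%N ->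
  (n' - minn T' n'.-1 < n - minn T n.-1)%N.
Proof. rewrite -?subn1 => *; lia. Qed.

Lemma N3 (a t : nat) : (0 < t)%N -> (t + 1 <= a)%N ->
  [/\ (1 <= a - t)%N, (a - t < a)%N, (a + 1 - t = (a - t).+1)%N & (a - (a - t) = t)%N].
Proof. move=> *; split; lia. Qed.

Lemma step (R : realFieldType) (N t : nat) (m m' : 'I_N -> R) :
  (0 < t)%N -> invm t m -> (exists n, m n != 0) -> alg_step t m m' ->
  invm t m' /\ (pot t m' < pot t m)%N.
Proof.
move=> t0 [m0 mle] [n0 hn0] [l1 [s]] /=.
set l := l1 :: s.
move=> [ul meml srt hm'].
have {}hm' : forall j, m' j = (if (j == l1) || (j \in drop (size l + 1 - t)%N l)
   then m j - (if (t + 1 <= size l)%N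
     then Num.min ((\sum_(n < N) m n) / t%:R - m (nth l1 l (size l - t)%N)) (m l1)
     else m l1) else m j).
  by move=> j; rewrite hm'.
have tr : transitive (fun i j : 'I_N => m i <= m j).
  by move=> a b d; apply: le_trans.
rewrite /sumv in mle *.
set S := \sum_(n < N) m n in mle hm' *.
set c := S / t%:R in mle hm' *.
have tR : 0 < t%:R :> R by rewrite ltr0n.
have mpos : forall j, j \in l -> 0 < m j.
  by move=> j; rewrite meml lt_def => ->; rewrite m0.
have Sl : S = \sum_(j <- l) m j.
  rewrite /S (bigID (fun n => m n != 0)) /= [X in _ + X]big1; last first.
    by move=> i; rewrite negbK => /eqP.
  by rewrite addr0 big_uniq //; apply: eq_bigl => i; rewrite meml.
have Sg : S = \sum_(0 <= i < size l) m (nth l1 l i) by rewrite Sl (big_nth l1).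
have Spos : 0 < S.
  rewrite Sl big_cons; have h1 := mpos l1 (mem_head _ _).
  have h2 : 0 <= \sum_(j <- s) m j by apply: sumr_ge0 => i _; apply: m0.
  exact: L1 h1 h2.
have cpos : 0 < c by rewrite divr_gt0.
have Sc : S = t%:R * c by rewrite /c mulrC divfK // gt_eqF.
have gle : forall i, m (nth l1 l i) <= c by move=> i; apply: mle.
have Nt : (t <= size l)%N.
  have : S <= \sum_(0 <= i < size l) c by rewrite Sg; apply: ler_sum_nat.
  rewrite sumr_const_nat subn0 Sc => h.
  rewrite -[c *+ _]mulr_natr [c * _]mulrC ler_pM2r // in h.
  by rewrite -(ler_nat R).
have minl : forall j, j \in l -> m l1 <= m j.
  move=> j; rewrite in_cons => /orP [/eqP -> //|js].
  by have := order_path_min tr srt => /allP; apply.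
have nthle : forall i k, (i <= k < size l)%N -> m (nth l1 l i) <= m (nth l1 l k).
  move=> i k /andP [ik ks].
  apply: (sorted_leq_nth tr); [by move=> a; exact: lexx| by [] | by rewrite inE (leq_ltn_trans ik ks) | by rewrite inE ks | by []].
have ul' : uniq l := ul.
have ncard : #|nzp m| = size l.
  rewrite -(card_uniqP ul'); apply: eq_card => j; by rewrite /nzp inE meml.
have nzpos : (0 < #|nzp m|)%N by apply/card_gt0P; exists n0.
have [big|small] := boolP (t + 1 <= size l)%N; last first.
  have Nt' : size l = t by apply: N0.
  rewrite (negbTE small) in hm'.
  have dr : drop (size l + 1 - t) l = s by rewrite Nt' addKn /= drop0.
  have alleq : forall i, (i < size l)%N -> m (nth l1 l i) = c.
    have : \sum_(i < size l) (c - m (nth l1 l i)) = 0.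
      rewrite sumrB -(big_mkord xpredT (fun i => m (nth l1 l i))) -Sg.
      rewrite -(big_mkord xpredT (fun _ => c)) sumr_const_nat subn0 Nt' Sc.
      by rewrite -[c *+ t]mulr_natl subrr.
    move=> hs i ilt.
    have nn : forall j : 'I_(size l), true -> 0 <= c - m (nth l1 l j).
      by move=> j _; rewrite subr_ge0.
    have := @psumr_eq0P _ _ _ _ nn hs (Ordinal ilt) isT.
    by move/eqP; rewrite subr_eq0 => /eqP.
  have mj : forall j, j \in l -> m j = c.
    by move=> j jl; rewrite -(nth_index l1 jl) alleq // index_mem.
  have m'0 : forall j, m' j = 0.
    move=> j; rewrite hm' dr -in_cons -/l; case: (boolP (j \in l)) => jl.
      by rewrite mj // mj ?mem_head // subrr.
    by apply/eqP; move: jl; rewrite meml negbK.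
  split.
    split=> n; rewrite m'0 //; by rewrite /sumv big1 // mul0r.
  rewrite /pot (@eq_card0 _ (nzp m')); last by move=> n; rewrite /nzp !inE m'0 eqxx.
  exact: P0.
set k := (size l - t)%N.
have [k1 kl e1 e2] := N3 t0 big.
rewrite big e1 in hm'.
set p := nth l1 l k in hm'.
set alpha := Num.min (c - m p) (m l1) in hm'.
have pl : p \in l by apply: mem_nth.
have l1l : l1 \in l by apply: mem_head.
have l1p : m l1 <= m p by apply: minl.
have mpc : m p < c.
  rewrite ltNge; apply/negP => cp.
  have ge : forall i, (k <= i < size l)%N -> m (nth l1 l i) = c.
    move=> i /andP [ki il]; apply/eqP; rewrite eq_le gle /=.
    apply: le_trans cp (nthle k i _); by rewrite ki il.
  have : S = \sum_(0 <= i < k) m (nth l1 l i) + \sum_(k <= i < size l) m (nth l1 l i).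
    by rewrite -(@big_cat_nat _ _ _ k 0 (size l) _ _ (leq0n k) (ltnW kl)).
  rewrite (eq_big_nat _ _ ge) sumr_const_nat.
  have : 0 < \sum_(0 <= i < k) m (nth l1 l i).
    rewrite big_ltn //; have h1 := mpos l1 l1l.
    have h2 : 0 <= \sum_(1 <= i < k) m (nth l1 l i) by apply: sumr_ge0 => i _; apply: m0.
    exact: L1 h1 h2.
  rewrite e2.
  rewrite -[c *+ t]mulr_natl -Sc; exact: L2.
have notNF : forall j, j \in l -> ~~ ((j == l1) || (j \in drop k.+1 l)) -> m j <= m p.
  move=> j jl; rewrite negb_or => /andP [_ nd].
  have ij : (index j l <= k)%N.
    rewrite leqNgt; apply/negP => h; move/negP: nd; apply; apply: memdrop => //.
  rewrite -(nth_index l1 jl); apply: nthle; by rewrite ij kl.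
have NFl : forall j, (j == l1) || (j \in drop k.+1 l) -> j \in l.
  by move=> j /orP [/eqP ->|/mem_drop].
have al1 : alpha <= m l1 by rewrite /alpha ge_min lexx orbT.
have al2 : alpha <= c - m p by rewrite /alpha ge_min lexx.
have alpos : 0 < alpha.
  by rewrite /alpha lt_min subr_gt0 mpc mpos.
have cNF : #|[pred j | (j == l1) || (j \in drop k.+1 l)]| = t.
  have u : uniq (l1 :: drop k.+1 l).
    move: ul => /andP [l1s us] /=; rewrite drop_uniq // andbT.
    by apply: contra l1s => /mem_drop.
  rewrite (@eq_card _ _ (mem (l1 :: drop k.+1 l))); last by move=> j; rewrite !inE.
  rewrite (card_uniqP u).
  change ((size (drop k.+1 l)).+1 = t).
  by rewrite size_drop /k N1.
have sm' : sumv m' = S - alpha *+ t.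
  rewrite /sumv (eq_bigr (fun n => m n - (if (n == l1) || (n \in drop k.+1 l) then alpha else 0))); last first.
    by move=> n _; rewrite hm'; case: ifP => _; rewrite ?subr0.
  rewrite sumrB -big_mkcond /= sumr_const.
  by rewrite cNF.
have c'E : sumv m' / t%:R = c - alpha.
  by rewrite sm' /c -[alpha *+ t]mulr_natr mulrBl mulfK // gt_eqF.
have c'pos : 0 < c - alpha by exact: L3 al1 l1p mpc.
split.
  split=> n; [| rewrite c'E]; rewrite hm'; case: ifP => hn.
  - by rewrite subr_ge0; apply: le_trans al1 (minl n (NFl n hn)).
  - exact: m0.
  - by rewrite lerD2r mle.
  - case: (boolP (n \in l)) => nl.
      exact: L4 (notNF n nl (negbT hn)) al2.
    have -> : m n = 0 by apply/eqP; move: nl; rewrite meml negbK.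
    exact: ltW.
have nzs : forall j, m' j != 0 -> m j != 0.
  move=> j; apply: contraNN => /eqP mj0.
  have jl : j \notin l by rewrite meml mj0 eqxx.
  rewrite hm'; case: ifP => [/NFl|_]; [by rewrite (negbTE jl)|by rewrite mj0].
have tdrop : forall j, j \in tightp t m -> j \in drop k.+1 l.
  move=> j; rewrite inE => /andP [nz /eqP mc].
  change (m j = c) in mc.
  have jl : j \in l by rewrite meml.
  case/boolP: ((j == l1) || (j \in drop k.+1 l)) => [/orP [/eqP ej|//]|hn].
    have h : m l1 = c by rewrite -ej.
    by case: (L5 l1p mpc h).
  by case: (L5 (notNF j jl hn) mpc mc).
have ct : (#|tightp t m| <= t.-1)%N.
  apply: leq_trans (subset_leq_card (B := mem (drop k.+1 l)) _) _.
    by apply/subsetP => j; exact: tdrop.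
  by apply: leq_trans (card_size _) _; rewrite size_drop /k N2.
have tsub : forall j, j \in tightp t m -> j \in tightp t m'.
  move=> j hj; have jd := tdrop j hj; move: hj; rewrite !inE => /andP [_ /eqP mc].
  change (m j = c) in mc.
  rewrite c'E hm' jd orbT mc eqxx andbT; by rewrite gt_eqF.
have nzsub : nzp m' \subset nzp m by apply/subsetP => j; rewrite !inE; exact: nzs.
have Tle : (#|tightp t m| <= #|tightp t m'|)%N.
  by apply: subset_leq_card; apply/subsetP => j; exact: tsub.
have Nle : (#|nzp m'| <= #|nzp m|)%N by apply: subset_leq_card.
rewrite /pot.
case: (leP (m l1) (c - m p)) => h.
  have ae : alpha = m l1.
    rewrite /alpha minEle; case: ifP => // h'; apply/eqP; by rewrite eq_le h' h.
  have m'l1 : m' l1 = 0 by rewrite hm' eqxx /= ae subrr.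
  have : (#|[predU1 l1 & nzp m']| <= #|nzp m|)%N.
    apply: subset_leq_card; apply/subsetP => j; rewrite !inE => /orP [/eqP ->|].
      by rewrite gt_eqF // mpos.
    exact: nzs.
  rewrite cardU1 inE m'l1 eqxx /= => h1.
  rewrite ncard in h1 *; exact: P1 Tle ct big h1.
have ae : alpha = c - m p by rewrite /alpha minEle ltW.
have pNF : ((p == l1) || (p \in drop k.+1 l)) = false.
  apply/negbTE; rewrite negb_or; apply/andP; split.
    by rewrite /p -[l1 in _ == l1]/(nth l1 l 0) nth_uniq // -lt0n k1.
  by apply/negP => /(drop_index_ge ul'); rewrite /p index_uniq // ltnn.
have m'p : m' p = m p by rewrite hm' pNF.
have : (#|[predU1 p & tightp t m]| <= #|tightp t m'|)%N.
  apply: subset_leq_card; apply/subsetP => j; rewrite !inE => /orP [/eqP ->|].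
    rewrite m'p c'E ae; apply/andP; split; first by rewrite gt_eqF // mpos.
    by apply/eqP; ring.
  by move=> hj; have := tsub j; rewrite !inE; apply.
rewrite cardU1 inE.
have -> : (m p == sumv m / t%:R) = false by apply/negbTE; rewrite lt_eqF.
rewrite andbF /= => h1.
rewrite ncard in Nle *; exact: P2 t0 Nle h1 ct big.
Qed.

Lemma P3 (n T : nat) : (0 < n)%N -> (0 < n - minn T n.-1)%N.
Proof. rewrite -?subn1 => *; lia. Qed.

Lemma potpos (R : realFieldType) (N t : nat) (m : 'I_N -> R) :
  (exists n, m n != 0) -> (0 < pot t m)%N.
Proof.
move=> [n0 h]; apply: P3; apply/card_gt0P; exists n0; by rewrite inE.
Qed.

Unset Implicit Arguments.

Theorem theorem3 (R : realFieldType) (N t : nat) (mu : 'I_N -> R) :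
  (0 < t)%N -> (t <= N)%N ->
  (forall n, 0 < mu n <= 1) ->
  \sum_(n < N) mu n = t%:R ->
  forall run : nat -> ('I_N -> R),
    (forall n, run 0%N n = mu n) ->
    (forall f, (exists n, run f n != 0) -> alg_step t (run f) (run f.+1)) ->
    exists F : nat,
      [/\ (F <= N)%N,
          (forall n, run F n = 0) &
          (forall f, (f < F)%N -> exists n, run f n != 0)].
Proof.
move=> t0 tN mu01 musum run r0 rstep.
have inv0 : invm t (run 0%N).
  split => n; rewrite r0.
    by case/andP: (mu01 n) => /ltW.
  rewrite /sumv (eq_bigr mu (fun n _ => r0 n)) musum mulfV ?gt_eqF ?ltr0n //.
  by case/andP: (mu01 n).
have pot0 : (pot t (run 0%N) <= N)%N.
  rewrite /pot; apply: leq_trans (leq_subr _ _) _.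
  by apply: leq_trans (max_card _) _; rewrite card_ord.
have key : forall f, (forall g, (g < f)%N -> exists n, run g n != 0) ->
    invm t (run f) /\ (pot t (run f) + f <= N)%N.
  elim=> [|f IH] H; first by split => //; rewrite addn0.
  have [iv pf] := IH (fun g gf => H g (leqW gf)).
  have [iv' pf'] := step t0 iv (H f (ltnSn f)) (rstep f (H f (ltnSn f))).
  split => //; rewrite addnS; apply: leq_trans _ pf; by rewrite ltn_add2r.
have ex : exists g, (g <= N)%N && [forall n, run g n == 0].
  case: (boolP [exists g : 'I_N.+1, [forall n, run g n == 0]]) => [/existsP [g hg]|hno].
    by exists g; rewrite hg -ltnS ltn_ord.
  have nz : forall g, (g <= N)%N -> exists n, run g n != 0.
    move=> g gN; move/existsPn: hno => /(_ (Ordinal (gN : (g < N.+1)%N))) /forallPn.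
    by move=> [n hn]; exists n.
  have [_ pN] := key N (fun g gN => nz g (ltnW gN)).
  have := potpos t (nz N (leqnn N)).
  have : (pot t (run N) <= 0)%N by rewrite -(leq_add2r N) add0n.
  by rewrite leqn0 => /eqP ->.
have ex' : exists g, [forall n, run g n == 0].
  by case: ex => g /andP [_ hg]; exists g.
case: (ex_minnP ex') => F hF hmin.
exists F; split.
- case: ex => g /andP [gN hg]; exact: leq_trans (hmin g hg) gN.
- by move=> n; apply/eqP; move/forallP: hF; apply.
- move=> f fF; case: (boolP [forall n, run f n == 0]) => hf.
    by have := hmin f hf; rewrite leqNgt fF.
  by move/forallPn: hf => [n hn]; exists n.
Qed.
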